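(* Let $m,n,r$ be positive integers with $r\le n\le m$. Let $X\in\mathbb C^{m\times n}$ have rank $n$, and write $X=\begin{bmatrix}Y\\ \widetilde Y\end{bmatrix}$ with $Y\in\mathbb C^{r\times n}$ of rank $r$ and $\widetilde Y\in\mathbb C^{(m-r)\times n}$. Let $\Pi_X:=X(X^*X)^{-1}X^*$ and let $\Pi_X^{[r],[r]}$ be its top-left $r\times r$ submatrix. Then $\Pi_X^{[r],[r]}=I_r$ if and only if $\mathrm{colspan}(\widetilde Y)=\mathrm{colspan}(\widetilde YA)$ for some matrix $A$ whose column space equals $\ker Y$.
   Context: $\mathrm{colspan}(B)$ denotes the column space of a matrix $B$. *)

(* Defs.v *)
From mathcomp Require Import all_boot all_order all_algebra.
Set Implicit Arguments. Unset Strict Implicit. Unset Printing Implicit Defensive.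
Import Order.TTheory GRing.Theory Num.Theory.
Local Open Scope ring_scope.

Definition adjmx (C : numClosedFieldType) (p q : nat) (X : 'M[C]_(p, q)) : 'M[C]_(q, p) :=
  (map_mx Num.conj X)^T.

Definition projmx (C : numClosedFieldType) (p q : nat) (X : 'M[C]_(p, q)) : 'M[C]_p :=
  X *m invmx (adjmx X *m X) *m adjmx X.

(* colspan(B) = colspan(D), via row spaces of the transposes *)
Definition colspan_eq (C : fieldType) (p q1 q2 : nat)
  (B : 'M[C]_(p, q1)) (D : 'M[C]_(p, q2)) : bool :=
  (B^T == D^T)%MS.

(* colspan(A) = ker Y = { v | Y v = 0 }; kermx Y^T is the row kernel of Y^T,
   i.e. its rows u satisfy u Y^T = 0, i.e. Y u^T = 0 *)
Definition colspan_eq_ker (C : fieldType) (r n p : nat)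
  (A : 'M[C]_(n, p)) (Y : 'M[C]_(r, n)) : bool :=
  (A^T == kermx Y^T)%MS.

(* Main.v *)
Require Import Defs.
From mathcomp Require Import all_boot all_order all_algebra.
Import Order.TTheory GRing.Theory Num.Theory.
Local Open Scope ring_scope.
Set Implicit Arguments. Unset Strict Implicit.


Lemma adjmxM (C : numClosedFieldType) p q s (A : 'M[C]_(p, q)) (B : 'M[C]_(q, s)) :
  adjmx (A *m B) = adjmx B *m adjmx A.
Proof. by rewrite /adjmx map_mxM trmx_mul. Qed.

Lemma adjmxK (C : numClosedFieldType) p q (A : 'M[C]_(p, q)) : adjmx (adjmx A) = A.
Proof.
rewrite /adjmx map_trmx trmxK -map_mx_comp.
by apply/matrixP => i j; rewrite !mxE; exact: conjCK.
Qed.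

Lemma adjmx1 (C : numClosedFieldType) p : adjmx (1%:M : 'M[C]_p) = 1%:M.
Proof. by rewrite /adjmx map_mx1 trmx1. Qed.

Lemma adjmx0 (C : numClosedFieldType) p q : adjmx (0 : 'M[C]_(p, q)) = 0.
Proof. by rewrite /adjmx map_mx0 trmx0. Qed.

Lemma adjmx_inv (C : numClosedFieldType) p (A : 'M[C]_p) : adjmx (invmx A) = invmx (adjmx A).
Proof. by rewrite /adjmx map_invmx trmx_inv. Qed.

Lemma rank_adjmx (C : numClosedFieldType) p q (A : 'M[C]_(p, q)) : \rank (adjmx A) = \rank A.
Proof. by rewrite /adjmx mxrank_tr mxrank_map. Qed.

Lemma adjmx_col (C : numClosedFieldType) p1 p2 q (A : 'M[C]_(p1, q)) (B : 'M[C]_(p2, q)) :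
  adjmx (col_mx A B) = row_mx (adjmx A) (adjmx B).
Proof. by rewrite /adjmx map_col_mx tr_col_mx. Qed.

Lemma adj_self_eq0 (C : numClosedFieldType) p q (D : 'M[C]_(p, q)) : adjmx D *m D = 0 -> D = 0.
Proof.
move=> H; apply/matrixP => i j.
have := congr1 (fun M : 'M_q => M j j) H; rewrite !mxE => /eqP.
rewrite psumr_eq0; last by move=> k _; rewrite !mxE mulrC mul_conjC_ge0.
move=> /allP /(_ i (mem_index_enum _)) /=; rewrite !mxE mulrC mul_conjC_eq0.
by move/eqP.
Qed.

Lemma gram_unit (C : numClosedFieldType) p q (X : 'M[C]_(p, q)) : \rank X = q -> adjmx X *m X \in unitmx.
Proof.
move=> rX; rewrite -row_free_unit -kermx_eq0; apply/eqP.
set U := kermx _.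
have HU : U *m (adjmx X *m X) = 0 by exact: mulmx_ker.
have H1 : X *m adjmx U = 0.
  apply: adj_self_eq0; rewrite adjmxM adjmxK mulmxA -(mulmxA U) HU.
  by rewrite mul0mx.
have rf : row_free (adjmx X) by rewrite /row_free rank_adjmx rX.
apply: (row_free_inj rf) => /=; rewrite mul0mx.
by rewrite -(adjmxK (U *m adjmx X)) adjmxM adjmxK H1 adjmx0.
Qed.

Unset Implicit Arguments. Set Strict Implicit.
Theorem lemma8 (C : numClosedFieldType) (r k n : nat)
  (Y : 'M[C]_(r, n)) (Yt : 'M[C]_(k, n)) :
  (0 < r)%N -> (r <= n)%N -> (n <= r + k)%N ->
  \rank (col_mx Y Yt) = n -> \rank Y = r ->
  (ulsubmx (projmx (col_mx Y Yt)) = 1%:M <->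
   exists (p : nat) (A : 'M[C]_(n, p)),
     colspan_eq_ker A Y && colspan_eq Yt (Yt *m A)).
Proof.
move=> _ _ _ hX hY.
have Gu := gram_unit hX.
set X := col_mx Y Yt in Gu *.
set G := adjmx X *m X in Gu.
set M := invmx G.
have hG : G = adjmx Y *m Y + adjmx Yt *m Yt by rewrite /G /X adjmx_col mul_row_col.
have hP : ulsubmx (projmx X) = Y *m M *m adjmx Y.
  by rewrite /projmx -/G -/M /X adjmx_col mul_col_mx mul_col_row block_mxKul.
have hM : adjmx M = M by rewrite /M adjmx_inv /G adjmxM adjmxK.
rewrite hP; split.
- move=> H.
  set W := M *m adjmx Y.
  set D := Yt *m W.
  have YW : Y *m W = 1%:M by rewrite /W mulmxA.
  have e1 : adjmx W *m G *m W = 1%:M.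
    rewrite /W adjmxM adjmxK hM -!mulmxA (mulmxA (adjmx X)) -/G (mulmxA M G) mulVmx // mul1mx.
    by rewrite mulmxA.
  have e2 : adjmx W *m G *m W = adjmx (Y *m W) *m (Y *m W) + adjmx D *m D.
    by rewrite hG /D !adjmxM mulmxDr mulmxDl !mulmxA.
  rewrite YW adjmx1 mul1mx e1 in e2.
  have D0 : D = 0.
    apply: adj_self_eq0.
    by apply: (@addrI _ 1%:M); rewrite addr0 -e2.
  exists n, (kermx Y^T)^T.
  rewrite /colspan_eq_ker /colspan_eq trmxK trmx_mul trmxK.
  apply/andP; split; first by apply/eqmxP.
  apply/andP; split; last exact: submxMl.
  set N := (1%:M - W *m Y)^T.
  have e3 : N *m Yt^T = Yt^T.
    by rewrite /N -trmx_mul mulmxBr mulmx1 mulmxA -/D D0 mul0mx subr0.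
  rewrite -{1}e3; apply: submxMr; apply/sub_kermxP.
  by rewrite /N -trmx_mul mulmxBr mulmx1 mulmxA YW mul1mx subrr trmx0.
- case=> p [A /andP [hA hB]].
  rewrite /colspan_eq_ker in hA; rewrite /colspan_eq trmx_mul in hB.
  set K := kermx Y^T in hA.
  have hB' : (Yt^T <= K *m Yt^T)%MS.
    rewrite -(eqmxMr Yt^T (eqmxP hA)).
    by case/andP: hB.
  have rf : row_full Y^T by rewrite /row_full mxrank_tr hY.
  case/row_fullP: rf => Zt hZ.
  set S := Zt *m Yt^T *m pinvmx (K *m Yt^T).
  have hS : S *m (K *m Yt^T) = Zt *m Yt^T.
    apply: mulmxKpV; exact: submx_trans (submxMl _ _) hB'.
  set V := (Zt - S *m K)^T.
  have YV : Y *m V = 1%:M.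
    apply: trmx_inj; rewrite trmx_mul trmxK trmx1 mulmxBl hZ -mulmxA mulmx_ker.
    by rewrite mulmx0 subr0.
  have YtV : Yt *m V = 0.
    apply: trmx_inj; rewrite trmx_mul trmxK trmx0 mulmxBl -mulmxA hS.
    by rewrite subrr.
  have XV : X *m V = col_mx 1%:M 0 by rewrite /X mul_col_mx YV YtV.
  have GV : G *m V = adjmx Y.
    by rewrite /G -mulmxA XV /X adjmx_col mul_row_col mulmx1 mulmx0 addr0.
  by rewrite -GV mulmxA -(mulmxA Y M G) mulVmx // mulmx1 YV.
Qed.
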